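(* Let $I$ be an ideal of a Noetherian ring $A$. Then $$I_>\subseteq\bigcap_{J\in\mathcal{MR}(I)}{}^*J.$$
   Context: $\overline{v}_I(a)=\lim_{n\to\infty}\operatorname{ord}_I(a^n)/n$ where $\operatorname{ord}_I(a)=\max\{n: a\in I^n\}$ ($\infty$ if $a\in\bigcap_nI^n$); $I_>=\{a\in A\mid\overline{v}_I(a)>1\}$. A reduction of $I$ is an ideal $J\subseteq I$ with $\overline{J}=\overline{I}$ (integral closures); $\mathcal{MR}(I)$ is the set of minimal reductions of $I$ (reductions minimal with respect to inclusion). ${}^*J$ is the weak subintegral closure of $J$: $b\in A$ lies in ${}^*J$ if there exist $q\in\mathbb{N}$ and $a_i\in J^i$ ($1\le i\le 2q+1$) with $b^n+\sum_{i=1}^n\binom{n}{i}a_ib^{n-i}=0$ for $q+1\le n\le 2q+1$. *)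

(* Defs.v *)
From HB Require Import structures.
From mathcomp Require Import all_boot all_order all_algebra.
From mathcomp Require Import all_classical all_reals all_analysis.
From mathcomp Require Import Rstruct Rstruct_topology.
Set Implicit Arguments. Unset Strict Implicit. Unset Printing Implicit Defensive.
Import Order.TTheory GRing.Theory Num.Theory.
Local Open Scope classical_set_scope.
Local Open Scope ring_scope.

Section IdealDefs.
Variable A : comPzRingType.

Definition is_ideal (I : set A) : Prop :=
  [/\ I 0, (forall x y, I x -> I y -> I (x + y)) & (forall r x, I x -> I (r * x))].

Definition noetherian : Prop :=
  forall C : nat -> set A, (forall n, is_ideal (C n)) ->
    (forall n, C n `<=` C n.+1) -> exists N, forall m, (N <= m)%N -> C m = C N.

Definition ideal_mul (I J : set A) : set A :=
  [set a | exists s : seq (A * A),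
     (forall p, p \in s -> I p.1 /\ J p.2) /\ a = \sum_(p <- s) p.1 * p.2].

Fixpoint ideal_pow (I : set A) (n : nat) : set A :=
  if n is m.+1 then ideal_mul (ideal_pow I m) I else [set: A].

(* ord_I(a) = max {n | a \in I^n}, +oo if a \in \bigcap_n I^n.
   Since I^0 = A and the powers decrease, this max is the supremum. *)
Definition ord (I : set A) (a : A) : \bar Rdefinitions.R :=
  ereal_sup [set (n%:R)%:E | n in [set n : nat | ideal_pow I n a]].

Definition vbar (I : set A) (a : A) : \bar Rdefinitions.R :=
  limn (fun n : nat => (ord I (a ^+ n) * (n%:R^-1)%:E)%E).

Definition I_gt (I : set A) : set A := [set a | (1%:E < vbar I a)%E].

Definition int_closure (I : set A) : set A :=
  [set b | exists (n : nat) (c : nat -> A), (0 < n)%N /\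
     (forall i, (1 <= i <= n)%N -> ideal_pow I i (c i)) /\
     b ^+ n + \sum_(1 <= i < n.+1) c i * b ^+ (n - i) = 0].

Definition reduction (J I : set A) : Prop :=
  is_ideal J /\ J `<=` I /\ int_closure J = int_closure I.

Definition minimal_reduction (J I : set A) : Prop :=
  reduction J I /\ (forall K, reduction K I -> K `<=` J -> K = J).

Definition weak_subint_closure (J : set A) : set A :=
  [set b | exists (q : nat) (c : nat -> A),
     (forall i, (1 <= i <= 2 * q + 1)%N -> ideal_pow J i (c i)) /\
     (forall n, (q + 1 <= n <= 2 * q + 1)%N ->
        b ^+ n + \sum_(1 <= i < n.+1) ('C(n, i)%:R * c i * b ^+ (n - i)) = 0)].

End IdealDefs.

(* Main.v *)
Require Import Defs.
From HB Require Import structures.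
From mathcomp Require Import all_boot all_order all_algebra.
From mathcomp Require Import all_classical all_reals all_analysis.
From mathcomp Require Import Rstruct Rstruct_topology.
From mathcomp Require Import ring lra.
From mathcomp Require Import zify.
Import Order.TTheory GRing.Theory Num.Theory.
Local Open Scope classical_set_scope.
Local Open Scope ring_scope.
Lemma ev_gt (u : nat -> \bar Rdefinitions.R) : (1%:E < limn u)%E ->
  exists c : Rdefinitions.R, 1 < c /\ \forall n \near \oo, (c%:E < u n)%E.
Proof.
case: (pselect (exists l : \bar Rdefinitions.R, u @ \oo --> l)) => [[l hl]|hn]; last first.
  rewrite /lim /lim_in getPN; first by rewrite lte_fin ltr10.
  by move=> l hl; apply: hn; exists l.
rewrite (cvg_lim _ hl) //.
case: l hl => [r| |] hl.
- rewrite lte_fin => r1.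
  exists ((1 + r) / 2); split; first by rewrite ltr_pdivlMr // mul1r; lra.
  have := hl _ (@nbhs_open_ereal_gt _ r (fun x => (1 + x) / 2) _).
  apply. rewrite ltr_pdivrMr //. lra.
- move=> _; exists 2; split; first lra.
  exact: cvgey_gt.
- by [].
Qed.
Section Alg.
Variable A : comPzRingType.
Implicit Types X Y Z T : set A.

Notation M := (@ideal_mul A).
Notation P := (@ideal_pow A).

Lemma id0 T : is_ideal T -> T 0. Proof. by case. Qed.
Lemma idD T x y : is_ideal T -> T x -> T y -> T (x + y). Proof. by case=> _ h _; apply: h. Qed.
Lemma idM T r x : is_ideal T -> T x -> T (r * x). Proof. by case=> _ _ h; apply: h. Qed.
Lemma idMr T r x : is_ideal T -> T x -> T (x * r). Proof. by move=> h hx; rewrite mulrC; apply: idM. Qed.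
Lemma idN T x : is_ideal T -> T x -> T (- x).
Proof. by move=> h hx; rewrite -mulN1r; apply: idM. Qed.
Lemma idB T x y : is_ideal T -> T x -> T y -> T (x - y).
Proof. by move=> h hx hy; apply: idD => //; apply: idN. Qed.
Lemma idsum T (I : eqType) (s : seq I) (F : I -> A) : is_ideal T -> (forall i, i \in s -> T (F i)) -> T (\sum_(i <- s) F i).
Proof.
move=> h; elim: s => [|i s IH] hs; first by rewrite big_nil; apply: id0.
rewrite big_cons; apply: idD => //; first by apply: hs; rewrite inE eqxx.
by apply: IH => j hj; apply: hs; rewrite inE hj orbT.
Qed.

Lemma idT : is_ideal [set: A]. Proof. by split. Qed.

Lemma mul_gen X Y x y : X x -> Y y -> M X Y (x * y).
Proof.
move=> hx hy; exists [:: (x, y)]; split; last by rewrite big_seq1.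
by move=> p; rewrite inE => /eqP ->.
Qed.

Lemma mul_least X Y T : is_ideal T -> (forall x y, X x -> Y y -> T (x * y)) -> M X Y `<=` T.
Proof.
move=> hT h a [s [hs ->]]; apply: idsum => // p /hs [h1 h2]; exact: h.
Qed.

Lemma mul_ideal X Y : is_ideal X -> is_ideal (M X Y).
Proof.
move=> hX; split.
- by exists [::]; split => //; rewrite big_nil.
- move=> x y [s [hs ->]] [t [ht ->]]; exists (s ++ t); split; last by rewrite big_cat.
  by move=> p; rewrite mem_cat => /orP [/hs|/ht].
- move=> r x [s [hs ->]]; exists [seq (r * p.1, p.2) | p <- s]; split.
    move=> p /mapP [q /hs [h1 h2] ->] /=; split => //; exact: idM.
  by rewrite big_map mulr_sumr; apply: eq_bigr => p _ /=; rewrite mulrA.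
Qed.

Lemma pre_ideal T z : is_ideal T -> is_ideal [set x | T (x * z)].
Proof.
move=> hT; split => /=.
- by rewrite mul0r; apply: id0.
- by move=> x y hx hy; rewrite mulrDl; apply: idD.
- by move=> r x hx; rewrite -mulrA; apply: idM.
Qed.

Lemma mul_mono X Y X' Y' : is_ideal X' -> X `<=` X' -> Y `<=` Y' -> M X Y `<=` M X' Y'.
Proof.
move=> hX sX sY; apply: mul_least; first exact: mul_ideal.
by move=> x y hx hy; apply: mul_gen; [apply: sX | apply: sY].
Qed.

Lemma mul_comm X Y : is_ideal Y -> M X Y `<=` M Y X.
Proof.
move=> hY; apply: mul_least; first exact: mul_ideal.
by move=> x y hx hy; rewrite mulrC; apply: mul_gen.
Qed.

Lemma mul_assoc X Y Z : is_ideal X -> is_ideal Y -> M (M X Y) Z `<=` M X (M Y Z).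
Proof.
move=> hX hY; apply: mul_least; first exact: mul_ideal.
move=> w z hw hz.
have : M X Y `<=` [set x | M X (M Y Z) (x * z)].
  apply: mul_least; first by apply: pre_ideal; apply: mul_ideal.
  move=> x y hx hy /=; rewrite -mulrA; apply: mul_gen => //; exact: mul_gen.
by apply.
Qed.

Lemma mul_assoc' X Y Z : is_ideal X -> is_ideal Y -> is_ideal Z -> M X (M Y Z) `<=` M (M X Y) Z.
Proof.
move=> hX hY hZ x hx.
have h1 : M X (M Y Z) `<=` M (M Z Y) X.
  move=> w hw; apply: (@mul_mono (M Y Z) X (M Z Y) X (mul_ideal Z Y hZ)) => //.
    by apply: mul_comm.
  exact: (mul_comm X (M Y Z) (mul_ideal Y Z hY)).
have h2 : M (M Z Y) X `<=` M Z (M Y X) by apply: mul_assoc.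
have h3 : M Z (M Y X) `<=` M (M Y X) Z by apply: mul_comm; apply: mul_ideal.
have h4 : M (M Y X) Z `<=` M (M X Y) Z.
  by apply: mul_mono; [apply: mul_ideal | apply: mul_comm |].
exact/h4/h3/h2/h1.
Qed.

Lemma mul_subl X Y : is_ideal X -> M X Y `<=` X.
Proof. by move=> hX; apply: mul_least => // x y hx _; apply: idMr. Qed.
Lemma mul_subr X Y : is_ideal Y -> M X Y `<=` Y.
Proof. by move=> hY; apply: mul_least => // x y _ hy; apply: idM. Qed.
Lemma mul_T X : X `<=` M X [set: A].
Proof. by move=> x hx; rewrite -(mulr1 x); apply: mul_gen. Qed.
Lemma mul_Tl X : X `<=` M [set: A] X.
Proof. by move=> x hx; rewrite -(mul1r x); apply: mul_gen. Qed.

Lemma pow_ideal X n : is_ideal X -> is_ideal (P X n).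
Proof. by move=> hX; elim: n => [|n IH] /=; [exact: idT | exact: mul_ideal]. Qed.
Arguments mul_assoc {X Y Z}. Arguments mul_assoc' {X Y Z}. Arguments mul_comm {X Y}.
Arguments mul_subl {X Y}. Arguments mul_subr {X Y}. Arguments pow_ideal {X}.
Lemma pow1 X : is_ideal X -> P X 1 `<=` X.
Proof. by move=> hX; apply: mul_subr. Qed.
Lemma pow1' X : X `<=` P X 1.
Proof. exact: mul_Tl. Qed.

Lemma pow_add X a b : is_ideal X -> P X (a + b) `<=` M (P X a) (P X b).
Proof.
move=> hX; elim: b => [|b IH]; first by rewrite addn0; apply: mul_T.
rewrite addnS /= => x hx.
apply: (@mul_assoc (P X a) (P X b) X); try exact: pow_ideal.
by apply: (@mul_mono (P X (a + b)) X (M (P X a) (P X b)) X) => //; apply: mul_ideal; apply: pow_ideal.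
Qed.

Lemma pow_add' X a b : is_ideal X -> M (P X a) (P X b) `<=` P X (a + b).
Proof.
move=> hX; elim: b => [|b IH]; first by rewrite addn0; apply: mul_subl; apply: pow_ideal.
rewrite addnS /= => x hx.
apply: (@mul_mono (M (P X a) (P X b)) X (P X (a + b)) X) => //; first exact: pow_ideal.
by apply: mul_assoc' => //; apply: pow_ideal.
Qed.

Lemma pow_set_mono X Y n : is_ideal Y -> X `<=` Y -> P X n `<=` P Y n.
Proof.
move=> hY sXY; elim: n => [|n IH] //= x hx.
by apply: (@mul_mono (P X n) X (P Y n) Y) => //; apply: pow_ideal.
Qed.

Lemma pow_dec X a b : is_ideal X -> (a <= b)%N -> P X b `<=` P X a.
Proof.
move=> hX /subnKC <- x /(pow_add X a (b - a) hX) hx.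
by apply: (mul_subl (pow_ideal a hX)) hx.
Qed.

Lemma elt_pow X g n : X g -> P X n (g ^+ n).
Proof. by move=> hg; elim: n => [|n IH] //=; rewrite exprSr; apply: mul_gen. Qed.

Lemma rearr I J x y : is_ideal I -> is_ideal J ->
  M (M (P I x) J) (P I y) `<=` M (P I (x + y)) J.
Proof.
move=> hI hJ w hw.
have hx := pow_ideal x hI; have hy := pow_ideal y hI.
have h1 := mul_assoc hx hJ _ hw.
have h2 : M (P I x) (M (P I y) J) w.
  apply: (@mul_mono (P I x) (M J (P I y)) (P I x) (M (P I y) J)) => //.
  exact: mul_comm.
have h3 := mul_assoc' hx hy hJ _ h2.
apply: (@mul_mono (M (P I x) (P I y)) J (P I (x + y)) J) => //; first exact: pow_ideal.
exact: pow_add'.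
Qed.

Definition pr (g : A) : set A := [set x | exists r, x = r * g].
Lemma pr_ideal g : is_ideal (pr g).
Proof.
split.
- by exists 0; rewrite mul0r.
- by move=> x y [r ->] [s ->]; exists (r + s); rewrite mulrDl.
- by move=> r x [s ->]; exists (r * s); rewrite mulrA.
Qed.
Lemma pr_least g T : is_ideal T -> T g -> pr g `<=` T.
Proof. by move=> hT hg x [r ->]; apply: idM. Qed.
Lemma pr_self g : pr g g. Proof. by exists 1; rewrite mul1r. Qed.
Lemma pr_pow g n : P (pr g) n `<=` pr (g ^+ n).
Proof.
elim: n => [|n IH] /=; first by move=> x _; exists x; rewrite expr0 mulr1.
apply: mul_least; first exact: pr_ideal.
move=> x y /IH [r ->] [s ->]; exists (r * s); rewrite exprSr.
by rewrite mulrAC -!mulrA [g * _]mulrC !mulrA.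
Qed.

Definition isum X Y : set A := [set x | exists k l, X k /\ Y l /\ x = k + l].
Lemma isum_ideal X Y : is_ideal X -> is_ideal Y -> is_ideal (isum X Y).
Proof.
move=> hX hY; split.
- by exists 0, 0; rewrite addr0; split; [apply: id0|split; [apply: id0|]].
- move=> x y [k [l [hk [hl ->]]]] [k' [l' [hk' [hl' ->]]]].
  exists (k + k'), (l + l'); split; first exact: idD.
  by split; [exact: idD | rewrite addrACA].
- move=> r x [k [l [hk [hl ->]]]]; exists (r * k), (r * l); split; first exact: idM.
  by split; [exact: idM | rewrite mulrDr].
Qed.
Lemma isum_sub X Y T : is_ideal T -> X `<=` T -> Y `<=` T -> isum X Y `<=` T.
Proof. by move=> hT hX hY x [k [l [hk [hl ->]]]]; apply: idD => //; [apply: hX|apply: hY]. Qed.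

Section Binom.
Variables K L : set A.
Hypotheses (hK : is_ideal K) (hL : is_ideal L).
Definition U N : set A := [set x | forall T, is_ideal T ->
   (forall a b, (a + b = N)%N -> M (P K a) (P L b) `<=` T) -> T x].
Lemma U_ideal N : is_ideal (U N).
Proof.
split.
- by move=> T hT _; apply: id0.
- by move=> x y hx hy T hT h; apply: idD => //; [apply: hx|apply: hy].
- by move=> r x hx T hT h; apply: idM => //; apply: hx.
Qed.
Lemma pow_isum_U N : P (isum K L) N `<=` U N.
Proof.
elim: N => [|N IH] /=.
  move=> x _ T hT h; rewrite -(mulr1 x); apply: idM => //.
  by apply: (h 0%N 0%N) => //; rewrite -(mulr1 1); apply: mul_gen.
apply: mul_least; first exact: U_ideal.
move=> x y /IH hx [k [l [hk [hl ->]]]] T hT h.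
rewrite mulrDr; apply: idD => //.
- have : U N `<=` [set u | T (u * k)].
    move=> u hu; apply: hu; first exact: pre_ideal.
    move=> a b hab; apply: mul_least; first exact: pre_ideal.
    move=> p q hp hq /=.
    rewrite mulrAC; apply: (h a.+1 b); first by rewrite addSn hab.
    by apply: mul_gen => //; apply: mul_gen.
  by apply.
- have : U N `<=` [set u | T (u * l)].
    move=> u hu; apply: hu; first exact: pre_ideal.
    move=> a b hab; apply: mul_least; first exact: pre_ideal.
    move=> p q hp hq /=.
    rewrite -mulrA; apply: (h a b.+1); first by rewrite addnS hab.
    by apply: mul_gen => //; apply: mul_gen.
  by apply.
Qed.
Lemma binom T N : is_ideal T -> (forall a b, (a + b = N)%N -> M (P K a) (P L b) `<=` T) ->
  P (isum K L) N `<=` T.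
Proof. by move=> hT h x /pow_isum_U; apply. Qed.
End Binom.
Section Red.
Variables I J : set A.
Hypotheses (hI : is_ideal I) (hJ : is_ideal J).

Lemma absorb X Y n d b : is_ideal X -> is_ideal Y -> X `<=` I -> Y `<=` I ->
  P X n.+1 `<=` M (P I n) J ->
  M (P X (n.+1 + d)) (P Y b) `<=` M (P I (n + d + b)) J.
Proof.
move=> hX hY sX sY hn w hw.
have hIn := pow_ideal n hI; have hId := pow_ideal d hI; have hIb := pow_ideal b hI.
have hnJ : is_ideal (M (P I n) J) by apply: mul_ideal.
have h1 : M (M (P X n.+1) (P X d)) (P I b) w.
  apply: (@mul_mono (P X (n.+1 + d)) (P Y b)) hw => //.
  - by apply: mul_ideal; apply: pow_ideal.
  - exact: pow_add.
  - exact: pow_set_mono.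
have h2 : M (M (M (P I n) J) (P I d)) (P I b) w.
  apply: (@mul_mono (M (P X n.+1) (P X d)) (P I b)) h1 => //.
  - exact: mul_ideal.
  - by apply: mul_mono => //; apply: pow_set_mono.
have h3 : M (M (P I (n + d)) J) (P I b) w.
  apply: (@mul_mono (M (M (P I n) J) (P I d)) (P I b)) h2 => //.
  - by apply: mul_ideal; apply: pow_ideal.
  - exact: rearr.
exact: rearr.
Qed.

Fixpoint genI (s : seq A) : set A :=
  if s is g :: s' then isum (pr g) (genI s') else [set 0].

Lemma z_ideal : is_ideal [set (0 : A)].
Proof. by split => //= [x y -> ->|r x ->]; rewrite ?addr0 ?mulr0. Qed.

Lemma genI_ideal s : is_ideal (genI s).
Proof. elim: s => [|g s IH] /=; [exact: z_ideal | apply: isum_ideal => //; exact: pr_ideal]. Qed.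

Lemma genI_sub s : (forall x, x \in s -> I x) -> genI s `<=` I.
Proof.
elim: s => [|g s IH] /= hs; first by move=> x ->; apply: id0.
apply: isum_sub => //.
  by apply: pr_least => //; apply: hs; rewrite inE eqxx.
by apply: IH => x hx; apply: hs; rewrite inE hx orbT.
Qed.

Hypothesis hint : forall g, I g -> exists n, P (pr g) n.+1 `<=` M (P I n) J.

Lemma genI_red s : (forall x, x \in s -> I x) -> exists m, P (genI s) m.+1 `<=` M (P I m) J.
Proof.
elim: s => [|g s IH] hs.
  exists 0%N => x /(pow1 _ z_ideal) /= ->; apply: id0; apply: mul_ideal; exact: idT.
have [m hm] : exists m, P (genI s) m.+1 `<=` M (P I m) J.
  by apply: IH => x hx; apply: hs; rewrite inE hx orbT.
have gI : I g by apply: hs; rewrite inE eqxx.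
have [n hn] := hint _ gI.
have sK : pr g `<=` I by apply: pr_least.
have sL : genI s `<=` I by apply: genI_sub => x hx; apply: hs; rewrite inE hx orbT.
exists (n + m)%N.
apply: (binom (pr g) (genI s)); first by apply: mul_ideal; apply: pow_ideal.
move=> a b hab.
case: (ltnP n a) => hna.
  have -> : a = (n.+1 + (a - n.+1))%N by rewrite subnKC.
  have -> : (n + m)%N = (n + (a - n.+1) + b)%N.
    by move: hna hab; clear; lia.
  exact: (@absorb _ _ _ _ _ (pr_ideal g) (genI_ideal s) sK sL hn).
have hmb : (m < b)%N by move: hna hab; clear; lia.
have -> : b = (m.+1 + (b - m.+1))%N by rewrite subnKC.
have -> : (n + m)%N = (m + (b - m.+1) + a)%N by move: hmb hab; clear; lia.
move=> w hw; apply: (@absorb _ _ _ _ _ (genI_ideal s) (pr_ideal g) sL sK hm).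
by apply: (mul_comm (pow_ideal _ (genI_ideal s))) hw.
Qed.

End Red.
Lemma fg (I : set A) : noetherian A -> is_ideal I ->
  exists s, (forall x, x \in s -> I x) /\ I `<=` genI s.
Proof.
move=> hN hI.
case: (pselect (exists s, (forall x, x \in s -> I x) /\ I `<=` genI s)) => // H.
have H' : forall s : seq A, exists x, (forall y, y \in s -> I y) -> I x /\ ~ genI s x.
  move=> s; case: (pselect (exists x, I x /\ ~ genI s x)) => [[x hx]|hn]; first by exists x.
  exists 0 => hs; exfalso; apply: H; exists s; split => // x hx.
  by case: (pselect (genI s x)) => // hg; exfalso; apply: hn; exists x.
have [f hf] := choice H'.
pose sq := (fix sq (n : nat) : seq A := if n is k.+1 then f (sq k) :: sq k else [::]).
have hsq : forall n y, y \in sq n -> I y.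
  elim => [|n IH] y //=; rewrite inE => /orP [/eqP ->|]; last exact: IH.
  exact: (hf (sq n) (IH)).1.
have hmono : forall n, genI (sq n) `<=` genI (sq n.+1).
  move=> n x hx /=; exists 0, x; split; first exact: id0 (pr_ideal _).
  by split => //; rewrite add0r.
have [N hNN] := hN (fun n => genI (sq n)) (fun n => genI_ideal (sq n)) hmono.
exfalso; have := (hf (sq N) (hsq N)).2; apply.
rewrite -(hNN N.+1) //=; exists (f (sq N)), 0; split; first exact: pr_self.
by split; [exact: id0 (genI_ideal _) | rewrite addr0].
Qed.

Lemma hint_of (I J : set A) : is_ideal I -> is_ideal J -> J `<=` I ->
  int_closure J = int_closure I ->
  forall g, I g -> exists n, P (pr g) n.+1 `<=` M (P I n) J.
Proof.
move=> hI hJ sJI hcl g hg.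
have : int_closure I g.
  exists 1%N, (fun _ => - g); split => //; split.
    move=> i /andP [h1 h2]; have -> : i = 1%N by apply/eqP; rewrite eqn_leq h1 h2.
    by apply: pow1'; apply: idN.
  by rewrite big_nat1 subnn expr0 mulr1 expr1 addrN.
rewrite -hcl => -[n [c [n0 [hc heq]]]].
exists n.-1; rewrite prednK // => x /pr_pow; apply: pr_least.
  by apply: mul_ideal; apply: pow_ideal.
move/eqP: heq; rewrite addr_eq0 => /eqP ->; apply: idN; first by apply: mul_ideal; apply: pow_ideal.
apply: idsum; first by apply: mul_ideal; apply: pow_ideal.
move=> i; rewrite mem_index_iota => /andP [hi1 hi2].
have hci := hc i (introT andP (conj hi1 (ltnSE hi2))).
case: i hi1 hi2 hci => [//|i] _ hi2 hci.
have : M (M (P I i) J) (P I (n - i.+1)) (c i.+1 * g ^+ (n - i.+1)).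
  apply: mul_gen; last exact: elt_pow.
  apply: (@mul_mono (P J i) J) hci => //; first by apply: pow_ideal.
  exact: pow_set_mono.
move/rearr => /(_ hI hJ).
by have -> : (i + (n - i.+1))%N = n.-1 by move: hi2; clear; lia.
Qed.

Lemma powJ (I J : set A) m : is_ideal I -> is_ideal J -> P I m.+1 `<=` M (P I m) J ->
  forall t, P I (m + t) `<=` P J t.
Proof.
move=> hI hJ hm t.
suff : P I (m + t) `<=` M (P I m) (P J t).
  by move=> h x /h; apply: mul_subr; apply: pow_ideal.
have hIm := pow_ideal m hI.
elim: t => [|t IH]; first by rewrite addn0; apply: mul_T.
rewrite addnS => x hx.
have hJt := pow_ideal t hJ.
have h1 : M (M (P I m) (P J t)) I x.
  by apply: (@mul_mono (P I (m + t)) I) hx => //; apply: mul_ideal.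
have h2 := mul_assoc hIm hJt _ h1.
have h3 : M (P I m) (M I (P J t)) x.
  by apply: (@mul_mono (P I m) (M (P J t) I)) h2 => //; apply: mul_comm.
have h4 := mul_assoc' hIm hI hJt _ h3.
have h5 : M (M (P I m) J) (P J t) x.
  by apply: (@mul_mono (M (P I m) I) (P J t)) h4 => //; apply: mul_ideal.
have h6 := mul_assoc hIm hJ _ h5.
by apply: (@mul_mono (P I m) (M J (P J t))) h6 => //; apply: mul_comm.
Qed.
Section Weak.
Variables (b : A) (q : nat).

Fixpoint dseq (n : nat) : seq A :=
  if n is m.+1 then rcons (dseq m)
    (if (m <= q)%N then 0 else
      - (b ^+ m + \sum_(1 <= j < m) ('C(m, j)%:R * nth 0 (dseq m) j * b ^+ (m - j))))
  else [::].

Lemma size_dseq n : size (dseq n) = n.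
Proof. by elim: n => [|n IH] //=; rewrite size_rcons IH. Qed.

Definition cc i := nth 0 (dseq i.+1) i.

Lemma dseq_nth n j : (j < n)%N -> nth 0 (dseq n) j = cc j.
Proof.
elim: n => [//|n IH] hj.
rewrite /= nth_rcons size_dseq.
case: (ltngtP j n) => [hjn|hnj|->].
- by rewrite IH.
- by move: hj hnj; clear; lia.
by rewrite /cc /= nth_rcons size_dseq ltnn eqxx.
Qed.

Lemma cc_def i : cc i = if (i <= q)%N then 0 else
  - (b ^+ i + \sum_(1 <= j < i) ('C(i, j)%:R * cc j * b ^+ (i - j))).
Proof.
rewrite /cc /= nth_rcons size_dseq ltnn eqxx.
case: ifP => // _; congr (- (_ + _)).
rewrite !big_nat; apply: eq_bigr => j /andP [_ hj].
by rewrite dseq_nth.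
Qed.

Lemma cc_eq n : (q < n)%N ->
  b ^+ n + \sum_(1 <= i < n.+1) ('C(n, i)%:R * cc i * b ^+ (n - i)) = 0.
Proof.
move=> hqn.
rewrite big_nat_recr /=; last by move: hqn; clear; lia.
rewrite binn subnn expr0 mulr1 mul1r (cc_def n) leqNgt hqn /=.
by rewrite addrA addrN.
Qed.

Lemma cc_int i : exists z : int, cc i = z%:~R * b ^+ i.
Proof.
elim/ltn_ind: i => i IH.
rewrite cc_def; case: ifP => _; first by exists 0; rewrite mul0r.
suff [z hz] : exists z : int, \sum_(1 <= j < i) ('C(i, j)%:R * cc j * b ^+ (i - j)) = z%:~R * b ^+ i.
  by exists (- (1 + z)); rewrite hz mulrNz mulrzDr mulNr mulrDl mul1r.
rewrite big_nat_cond.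
apply: (big_ind (fun x => exists z : int, x = z%:~R * b ^+ i)).
- by exists 0; rewrite mul0r.
- by move=> x y [z1 ->] [z2 ->]; exists (z1 + z2); rewrite mulrzDr mulrDl.
- move=> j /andP [/andP [_ hj] _].
  have [z hz] := IH j hj; exists ('C(i, j)%:Z * z).
  rewrite hz mulrA -mulrA -exprD subnKC; last exact: ltnW.
  by rewrite intrM.
Qed.

End Weak.
End Alg.
Arguments hint_of {A I J}. Arguments fg {A I}. Arguments genI_red {A I J}.
Arguments pow_set_mono {A X Y}. Arguments powJ {A I J}. Arguments pow_dec {A X a b}.
Arguments cc_int {A}. Arguments cc_def {A}. Arguments cc_eq {A}. Arguments cc {A}.
Arguments genI_ideal {A}.

Lemma ord_gt (A : comPzRingType) (I : set A) a (n : nat) (c : Rdefinitions.R) : (0 < n)%N ->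
  (c%:E < ord I a * (n%:R^-1)%:E)%E -> exists k, ideal_pow I k a /\ c * n%:R < k%:R.
Proof.
move=> n0 h.
have hn : 0 < (n%:R : Rdefinitions.R) by rewrite ltr0n.
have h' : ((c * n%:R)%:E < ord I a)%E.
  move: h; case: (ord I a) => [r| |] //=.
  - by rewrite !lte_fin -ltr_pdivlMr.
  - by move=> _; apply: ltry.
  - by rewrite gt0_mulNye ?lte_fin ?invr_gt0.
have [y [k hk <-] hy] := ereal_sup_gt h'.
by exists k; split => //; rewrite lte_fin in hy.
Qed.

Theorem corollary4p5 (A : comPzRingType) (I : set A) :
  noetherian A -> is_ideal I ->
  I_gt I `<=` \bigcap_(J in [set J : set A | minimal_reduction J I])
                 weak_subint_closure J.
Proof.
move=> hN hI b hb J [[hJ [sJI hcl]] _].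
have [c [c1 [n0 _ hn0]]] := ev_gt _ hb.
have hint := hint_of hI hJ sJI hcl.
have [s [hs hIs]] := fg hN hI.
have [m hm] := genI_red hI hJ hint s hs.
have hm' : ideal_pow I m.+1 `<=` ideal_mul (ideal_pow I m) J.
  by move=> x hx; apply: hm; apply: (pow_set_mono _ (genI_ideal s) hIs).
have hpJ := powJ m hI hJ hm'.
pose q := (n0 + Num.trunc (m%:R / (c - 1)))%N.
have hbJ : forall n, (q < n)%N -> ideal_pow J n (b ^+ n).
  move=> n hqn.
  have hn0n : (n0 <= n)%N by move: hqn; rewrite /q; clear; lia.
  have npos : (0 < n)%N by move: hqn; clear; lia.
  have [k [hk hck]] := ord_gt _ _ _ _ _ npos (hn0 n hn0n).
  have ht := truncnS_gt (m%:R / (c - 1) : Rdefinitions.R).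
  have hq1 : ((Num.trunc (m%:R / (c - 1) : Rdefinitions.R)).+1%:R <= (n%:R : Rdefinitions.R)).
    by rewrite ler_nat; move: hqn; rewrite /q; clear; lia.
  have hc0 : 0 < c - 1 by rewrite subr_gt0.
  have hmn : (m%:R : Rdefinitions.R) < (c - 1) * n%:R.
    have : m%:R / (c - 1) < (n%:R : Rdefinitions.R) by apply: (lt_le_trans ht).
    by rewrite ltr_pdivrMr // mulrC.
  have hmk : (m + n < k)%N.
    rewrite -(ltr_nat Rdefinitions.R) natrD.
    apply: le_lt_trans hck; move: hmn; clear; lra.
  apply: (hpJ n); apply: (pow_dec hI (ltnW hmk)) hk.
exists q, (cc b q); split.
- move=> i /andP [hi1 hi2].
  case: (leqP i q) => hiq.
    rewrite cc_def hiq.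
    by apply: id0; apply: pow_ideal.
  have [z ->] := cc_int b q i.
  by apply: idM; [apply: pow_ideal | apply: hbJ].
- move=> n /andP [hn1 hn2]; apply: cc_eq.
  by move: hn1; clear; lia.
Qed.
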